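(* Let $A=I_0+\dots+I_n$ be a sum of C$^*$-ideals and let $J\subseteq\{0,\dots,n\}$. Consider in addition the zero ideal $I_{n+1}=0$, so that $A=I_0+\dots+I_n+I_{n+1}$ is an $(n+2)$-fold decomposition. Then there is an isomorphism of C$^*$-algebras $$S\big(B(I_0,\dots,I_n)_J\big)\cong B(I_0,\dots,I_n,0)_{J\cup\{n+1\}},$$ natural with respect to families of $*$-homomorphisms $I_j\to I'_j$ ($j\le n$) induced by a $*$-homomorphism $A\to A'=I'_0+\dots+I'_n$ mapping each $I_j$ into $I'_j$.
   Context: For C$^*$-ideals $I_0,\dots,I_m$ summing to $A$: $\Delta^m=\{x\in[0,1]^{m+1}:\sum_ix_i=1\}$, $\partial\Delta^m$ = points with a zero coordinate, $\Delta^m_j=\{x\in\Delta^m:x_j\le x_i\ \forall i\}$; $B(I_0,\dots,I_m)=\{f:\Delta^m\to A\text{ continuous}: f|_{\partial\Delta^m}=0,\ f(\Delta^m_j)\subseteq I_j\ \forall j\le m\}$; for $J\subseteq\{0,\dots,m\}$, $B(I_0,\dots,I_m)_J=\{f\in B(I_0,\dots,I_m):f(\Delta^m_{j'})=0\ \forall j'\notin J\}$. $SA=\{f:[0,1]\to A\text{ continuous}:f(0)=f(1)=0\}$. *)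

(* Defs.v *)
From Stdlib Require Import Reals Lra.
Open Scope R_scope.

Definition C := (R * R)%type.
Definition Cone : C := (1, 0).
Definition Cadd (c d : C) : C := (fst c + fst d, snd c + snd d).
Definition Cmul (c d : C) : C :=
  (fst c * fst d - snd c * snd d, fst c * snd d + snd c * fst d).
Definition Cconj (c : C) : C := (fst c, - snd c).
Definition Cabs (c : C) : R := sqrt (fst c * fst c + snd c * snd c).

Record CStarAlg := {
  car :> Type;
  zero : car;
  add : car -> car -> car;
  opp : car -> car;
  smul : C -> car -> car;
  mul : car -> car -> car;
  star : car -> car;
  norm : car -> R;
  addA : forall a b c, add a (add b c) = add (add a b) c;
  addC : forall a b, add a b = add b a;
  add0 : forall a, add zero a = a;
  addN : forall a, add (opp a) a = zero;
  smulA : forall c d a, smul (Cmul c d) a = smul c (smul d a);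
  smul1 : forall a, smul Cone a = a;
  smulDl : forall c d a, smul (Cadd c d) a = add (smul c a) (smul d a);
  smulDr : forall c a b, smul c (add a b) = add (smul c a) (smul c b);
  mulA : forall a b c, mul a (mul b c) = mul (mul a b) c;
  mulDl : forall a b c, mul (add a b) c = add (mul a c) (mul b c);
  mulDr : forall a b c, mul a (add b c) = add (mul a b) (mul a c);
  smul_mull : forall c a b, smul c (mul a b) = mul (smul c a) b;
  smul_mulr : forall c a b, smul c (mul a b) = mul a (smul c b);
  starD : forall a b, star (add a b) = add (star a) (star b);
  starZ : forall c a, star (smul c a) = smul (Cconj c) (star a);
  starM : forall a b, star (mul a b) = mul (star b) (star a);
  starK : forall a, star (star a) = a;
  norm_ge0 : forall a, 0 <= norm a;
  norm_eq0 : forall a, norm a = 0 -> a = zero;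
  normZ : forall c a, norm (smul c a) = Cabs c * norm a;
  normD : forall a b, norm (add a b) <= norm a + norm b;
  normM : forall a b, norm (mul a b) <= norm a * norm b;
  norm_Cstar : forall a, norm (mul (star a) a) = norm a * norm a;
  complete : forall u : nat -> car,
    (forall eps, eps > 0 -> exists N, forall p q, (p >= N)%nat -> (q >= N)%nat ->
        norm (add (u p) (opp (u q))) < eps) ->
    exists l, forall eps, eps > 0 -> exists N, forall p, (p >= N)%nat ->
        norm (add (u p) (opp l)) < eps
}.

Arguments zero {c0}.
Arguments add {c0}.
Arguments opp {c0}.
Arguments smul {c0}.
Arguments mul {c0}.
Arguments star {c0}.
Arguments norm {c0}.

Definition dist {A : CStarAlg} (a b : A) : R := norm (add a (opp b)).

Fixpoint sumA {A : CStarAlg} (u : nat -> A) (n : nat) : A :=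
  match n with
  | O => u O
  | S k => add (sumA u k) (u (S k))
  end.

Definition is_star_hom {A A' : CStarAlg} (phi : A -> A') : Prop :=
  (forall a b, phi (add a b) = add (phi a) (phi b)) /\
  (forall c a, phi (smul c a) = smul c (phi a)) /\
  (forall a b, phi (mul a b) = mul (phi a) (phi b)) /\
  (forall a, phi (star a) = star (phi a)).

Definition is_ideal {A : CStarAlg} (I : A -> Prop) : Prop :=
  I zero /\
  (forall a b, I a -> I b -> I (add a b)) /\
  (forall c a, I a -> I (smul c a)) /\
  (forall a b, I a -> I (mul b a) /\ I (mul a b)) /\
  (forall (u : nat -> A) l, (forall k, I (u k)) ->
     (forall eps, eps > 0 -> exists N, forall p, (p >= N)%nat -> dist (u p) l < eps) ->
     I l).

Definition ideal_decomp (A : CStarAlg) (m : nat) (I : nat -> A -> Prop) : Prop :=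
  (forall j, (j <= m)%nat -> is_ideal (I j)) /\
  (forall a : A, exists u : nat -> A,
     (forall j, (j <= m)%nat -> I j (u j)) /\ a = sumA u m).

(* points of Delta^m are functions x : nat -> R, with coordinates x 0..x m
   and x i = 0 for i > m (so points are determined by their m+1 coordinates) *)
Definition in_simplex (m : nat) (x : nat -> R) : Prop :=
  (forall i, (i <= m)%nat -> 0 <= x i <= 1) /\
  (forall i, (m < i)%nat -> x i = 0) /\
  sum_f_R0 x m = 1.

Definition Simplex (m : nat) := { x : nat -> R | in_simplex m x }.

Definition on_boundary {m} (x : Simplex m) : Prop :=
  exists i, (i <= m)%nat /\ proj1_sig x i = 0.

Definition in_face_j {m} (j : nat) (x : Simplex m) : Prop :=
  forall i, (i <= m)%nat -> proj1_sig x j <= proj1_sig x i.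

Definition continuous_on_simplex {A : CStarAlg} {m} (f : Simplex m -> A) : Prop :=
  forall x eps, eps > 0 -> exists d, d > 0 /\ forall y : Simplex m,
    (forall i, (i <= m)%nat -> Rabs (proj1_sig x i - proj1_sig y i) < d) ->
    dist (f x) (f y) < eps.

Definition inB {A : CStarAlg} (m : nat) (I : nat -> A -> Prop)
  (f : Simplex m -> A) : Prop :=
  continuous_on_simplex f /\
  (forall x, on_boundary x -> f x = zero) /\
  (forall j x, (j <= m)%nat -> in_face_j j x -> I j (f x)).

Definition inBJ {A : CStarAlg} (m : nat) (I : nat -> A -> Prop) (J : nat -> Prop)
  (f : Simplex m -> A) : Prop :=
  inB m I f /\
  (forall j' x, (j' <= m)%nat -> ~ J j' -> in_face_j j' x -> f x = zero).

Definition I01 := { t : R | 0 <= t <= 1 }.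

(* S B = continuous f : [0,1] -> B with f 0 = f 1 = 0, B carrying the sup norm.
   An element is stored uncurried as g : I01 * Simplex m -> A, with
   t |-> (x |-> g (t,x)) the function [0,1] -> B. *)
Definition inSBJ {A : CStarAlg} (m : nat) (I : nat -> A -> Prop) (J : nat -> Prop)
  (g : I01 * Simplex m -> A) : Prop :=
  (forall t, inBJ m I J (fun x => g (t, x))) /\
  (forall t x, (proj1_sig t = 0 \/ proj1_sig t = 1) -> g (t, x) = zero) /\
  (forall t eps, eps > 0 -> exists d, d > 0 /\ forall s : I01,
     Rabs (proj1_sig s - proj1_sig t) < d ->
     forall x, dist (g (s, x)) (g (t, x)) <= eps).

Definition zero_ideal (A : CStarAlg) : A -> Prop := fun a => a = zero.

Definition extend_zero {A : CStarAlg} (n : nat) (I : nat -> A -> Prop) : nat -> A -> Prop :=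
  fun j => if Nat.eqb j (S n) then zero_ideal A else I j.

Definition addJ (J : nat -> Prop) (k : nat) : nat -> Prop := fun j => J j \/ j = k.

Definition is_star_iso_on {A : CStarAlg} {X Y : Type}
  (P : (X -> A) -> Prop) (Q : (Y -> A) -> Prop) (Phi : (X -> A) -> (Y -> A)) : Prop :=
  (forall f, P f -> Q (Phi f)) /\
  (forall f g, P f -> P g -> Phi f = Phi g -> f = g) /\
  (forall h, Q h -> exists f, P f /\ Phi f = h) /\
  (forall f g, P f -> P g -> Phi (fun z => add (f z) (g z)) = (fun y => add (Phi f y) (Phi g y))) /\
  (forall c f, P f -> Phi (fun z => smul c (f z)) = (fun y => smul c (Phi f y))) /\
  (forall f g, P f -> P g -> Phi (fun z => mul (f z) (g z)) = (fun y => mul (Phi f y) (Phi g y))) /\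
  (forall f, P f -> Phi (fun z => star (f z)) = (fun y => star (Phi f y))).

(* Main.v *)
Require Import Defs.
From Stdlib Require Import Reals Lra Lia.
From Stdlib Require Import ProofIrrelevance ClassicalEpsilon Classical FunctionalExtensionality.
Open Scope R_scope.
Local Notation dist := Defs.dist.
Local Notation C := Defs.C.

Set Warnings "-all".
Arguments addA {c0}.
Arguments addC {c0}.
Arguments add0 {c0}.
Arguments addN {c0}.
Arguments smulA {c0}.
Arguments smul1 {c0}.
Arguments smulDl {c0}.
Arguments smulDr {c0}.
Arguments mulA {c0}.
Arguments mulDl {c0}.
Arguments mulDr {c0}.
Arguments smul_mull {c0}.
Arguments smul_mulr {c0}.
Arguments starD {c0}.
Arguments starZ {c0}.
Arguments starM {c0}.
Arguments starK {c0}.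
Arguments norm_ge0 {c0}.
Arguments norm_eq0 {c0}.
Arguments normZ {c0}.
Arguments normD {c0}.
Arguments normM {c0}.
Arguments norm_Cstar {c0}.
Lemma add0r {A : CStarAlg} (a : A) : add a zero = a.
Proof. rewrite addC; apply add0. Qed.

Lemma addNr {A : CStarAlg} (a : A) : add a (opp a) = zero.
Proof. rewrite addC; apply addN. Qed.

Lemma add_cancel_l {A : CStarAlg} (a b c : A) : add a b = add a c -> b = c.
Proof.
  intro H. rewrite <- (add0 b), <- (add0 c), <- (addN a), <- !addA, H. reflexivity.
Qed.

Lemma idem_zero {A : CStarAlg} (a : A) : add a a = a -> a = zero.
Proof.
  intro H. apply (add_cancel_l a). rewrite H, add0r. reflexivity.
Qed.

Lemma smul_zero {A : CStarAlg} (c : Defs.C) : smul c (@zero A) = zero.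
Proof. apply idem_zero. rewrite <- smulDr, add0. reflexivity. Qed.

Lemma mul_zero {A : CStarAlg} : mul (@zero A) zero = zero.
Proof. apply idem_zero. rewrite <- mulDl, add0. reflexivity. Qed.

Lemma star_zero {A : CStarAlg} : star (@zero A) = zero.
Proof. apply idem_zero. rewrite <- starD, add0. reflexivity. Qed.

Lemma opp_zero {A : CStarAlg} : opp (@zero A) = zero.
Proof. rewrite <- (add0 (opp zero)). apply addNr. Qed.

Lemma hom_zero {A A' : CStarAlg} (phi : A -> A') : is_star_hom phi -> phi zero = zero.
Proof.
  intros [Ha _]. apply idem_zero. rewrite <- Ha, add0. reflexivity.
Qed.

Lemma smul00 {A : CStarAlg} (a : A) : smul (0,0) a = zero.
Proof.
  apply idem_zero. rewrite <- smulDl. unfold Cadd; simpl. rewrite Rplus_0_r. reflexivity.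
Qed.

Lemma norm_zero {A : CStarAlg} : norm (@zero A) = 0.
Proof.
  rewrite <- (smul00 (@zero A)), normZ. unfold Cabs; simpl.
  replace (0*0+0*0) with 0 by ring. rewrite sqrt_0. ring.
Qed.

Lemma opp_unique {A : CStarAlg} (a b : A) : add b a = zero -> b = opp a.
Proof.
  intro H. apply (add_cancel_l a). rewrite addC, H, addNr. reflexivity.
Qed.

Lemma smulN1 {A : CStarAlg} (a : A) : smul (-1, 0) a = opp a.
Proof.
  apply opp_unique. rewrite <- (smul1 a) at 2. rewrite <- smulDl.
  unfold Cadd, Cone; simpl. replace (-1+1) with 0 by ring. rewrite Rplus_0_r.
  apply smul00.
Qed.

Lemma oppD {A : CStarAlg} (a b : A) : opp (add a b) = add (opp a) (opp b).
Proof.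
  symmetry. apply opp_unique.
  rewrite <- addA, (addA (opp b)), (addC (opp b) a), <- addA, addN, add0r, addN. reflexivity.
Qed.

Lemma oppK {A : CStarAlg} (a : A) : opp (opp a) = a.
Proof. symmetry. apply opp_unique. apply addNr. Qed.

Lemma norm_opp {A : CStarAlg} (a : A) : norm (opp a) = norm a.
Proof.
  rewrite <- smulN1, normZ. unfold Cabs; simpl.
  replace (-1 * -1 + 0 * 0) with 1 by ring. rewrite sqrt_1. ring.
Qed.

Lemma dist_sym {A : CStarAlg} (a b : A) : dist a b = dist b a.
Proof.
  unfold dist. rewrite <- norm_opp, oppD, oppK, addC. reflexivity.
Qed.

Lemma dist_tri {A : CStarAlg} (a b c : A) : dist a c <= dist a b + dist b c.
Proof.
  unfold dist. replace (add a (opp c)) with (add (add a (opp b)) (add b (opp c))).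
  - apply normD.
  - rewrite <- addA, (addA (opp b)), addN, add0. reflexivity.
Qed.

Lemma dist_self {A : CStarAlg} (a : A) : dist a a = 0.
Proof. unfold dist. rewrite addNr. apply norm_zero. Qed.

Lemma dist_ge0 {A : CStarAlg} (a b : A) : 0 <= dist a b.
Proof. apply norm_ge0. Qed.
Ltac fixn := repeat match goal with H: ~ _ <= _ |- _ => apply Rnot_le_lt in H end.

Lemma inv_small (eps : R) : eps > 0 -> exists N, forall k, (k >= N)%nat -> / (INR k + 1) < eps.
Proof.
  intro He. destruct (archimed (/ eps)) as [H1 _].
  exists (Z.to_nat (up (/ eps))). intros k Hk.
  assert (Hpos : 0 < / eps) by (apply Rinv_0_lt_compat; lra).
  assert (HN : IZR (up (/eps)) <= INR k).
  { rewrite INR_IZR_INZ. apply IZR_le.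
    assert (0 <= up (/eps))%Z.
    { apply le_IZR. lra. }
    lia. }
  assert (Hk1 : / eps < INR k + 1) by lra.
  rewrite <- (Rinv_inv eps).
  apply Rinv_lt_contravar; [| lra].
  apply Rmult_lt_0_compat; [lra|]. pose proof (pos_INR k). lra.
Qed.

Lemma cv_bound (u : nat -> R) l a b : Un_cv u l -> (forall k, a <= u k <= b) -> a <= l <= b.
Proof.
  intros Hu Hb. split.
  - destruct (Rle_or_lt a l) as [|Hl]; auto.
    destruct (Hu (a - l)) as [N HN]; [lra|].
    specialize (HN N (le_n N)). specialize (Hb N). unfold R_dist in HN.
    apply Rabs_def2 in HN. lra.
  - destruct (Rle_or_lt l b) as [|Hl]; auto.
    destruct (Hu (l - b)) as [N HN]; [lra|].
    specialize (HN N (le_n N)). specialize (Hb N). unfold R_dist in HN.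
    apply Rabs_def2 in HN. lra.
Qed.

Lemma cv_const (c : R) : Un_cv (fun _ => c) c.
Proof. intros e He. exists O. intros. unfold R_dist. rewrite Rminus_diag, Rabs_R0. lra. Qed.

Lemma cv_inv (u : nat -> R) l : Un_cv u l -> l <> 0 -> Un_cv (fun k => / u k) (/ l).
Proof.
  intros Hu Hl.
  apply (continuity_seq Rinv u l); auto.
  change (continuity_pt (/ id)%F l).
  apply continuity_pt_inv; auto.
  apply derivable_continuous_pt. apply derivable_pt_id.
Qed.

Lemma cv_div (u v : nat -> R) l m : Un_cv u l -> Un_cv v m -> m <> 0 ->
  Un_cv (fun k => u k / v k) (l / m).
Proof.
  intros. unfold Rdiv. apply CV_mult; auto. apply cv_inv; auto.
Qed.

Lemma Rmin_lip a b a' b' d : Rabs (a - a') <= d -> Rabs (b - b') <= d -> Rabs (Rmin a b - Rmin a' b') <= d.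
Proof.
  unfold Rmin. destruct (Rle_dec a b), (Rle_dec a' b'); unfold Rabs in *;
    repeat destruct Rcase_abs; fixn; lra.
Qed.

Lemma cv_Rmin u v l m : Un_cv u l -> Un_cv v m -> Un_cv (fun k => Rmin (u k) (v k)) (Rmin l m).
Proof.
  intros Hu Hv e He. destruct (Hu e He) as [N1 H1]. destruct (Hv e He) as [N2 H2].
  exists (max N1 N2). intros k Hk. unfold R_dist in *.
  assert (A1 : Rabs (u k - l) < e) by (apply H1; lia).
  assert (A2 : Rabs (v k - m) < e) by (apply H2; lia).
  destruct (Rle_dec (Rabs (u k - l)) (Rabs (v k - m))).
  - eapply Rle_lt_trans; [apply Rmin_lip|]; [| apply Rle_refl | exact A2]; lra.
  - eapply Rle_lt_trans; [apply Rmin_lip|]; [apply Rle_refl | | exact A1]; lra.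
Qed.

Definition clamp (t : R) : R := Rmax 0 (Rmin 1 t).

Lemma clamp_in t : 0 <= clamp t <= 1.
Proof. unfold clamp, Rmax, Rmin. repeat destruct Rle_dec; fixn; lra. Qed.

Lemma clamp_id t : 0 <= t <= 1 -> clamp t = t.
Proof. intro. unfold clamp, Rmax, Rmin. repeat destruct Rle_dec; fixn; lra. Qed.

Lemma clamp_le0 t : t <= 0 -> clamp t = 0.
Proof. intro. unfold clamp, Rmax, Rmin. repeat destruct Rle_dec; fixn; lra. Qed.

Lemma clamp_lip t s : Rabs (clamp t - clamp s) <= Rabs (t - s).
Proof. unfold clamp, Rmax, Rmin. repeat destruct Rle_dec; unfold Rabs; repeat destruct Rcase_abs; fixn; lra. Qed.

Lemma cv_clamp u l : Un_cv u l -> Un_cv (fun k => clamp (u k)) (clamp l).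
Proof.
  intros Hu e He. destruct (Hu e He) as [N H]. exists N. intros k Hk. unfold R_dist in *.
  eapply Rle_lt_trans; [apply clamp_lip|]. auto.
Qed.

Lemma cv_unif (m : nat) (u : nat -> nat -> R) (v : nat -> R) :
  (forall i, (i <= m)%nat -> Un_cv (fun k => u k i) (v i)) ->
  forall d, d > 0 -> exists N, forall k, (k >= N)%nat -> forall i, (i <= m)%nat -> Rabs (u k i - v i) < d.
Proof.
  induction m as [|m IH]; intros Hc d Hd.
  - destruct (Hc O (le_n _) d Hd) as [N HN]. exists N. intros k Hk i Hi.
    assert (i = O) by lia. subst. apply HN; auto.
  - destruct (IH (fun i Hi => Hc i (le_S _ _ Hi)) d Hd) as [N1 H1].
    destruct (Hc (S m) (le_n _) d Hd) as [N2 H2].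
    exists (max N1 N2). intros k Hk i Hi.
    destruct (Nat.eq_dec i (S m)).
    + subst. apply H2. lia.
    + apply H1; lia.
Qed.

Lemma incr_ge (s : nat -> nat) : (forall j, (s j < s (S j))%nat) -> forall j, (j <= s j)%nat.
Proof. intros H j. induction j; [lia|]. specialize (H j). lia. Qed.

Lemma incr_mono (s : nat -> nat) : (forall j, (s j < s (S j))%nat) -> forall i j, (i <= j)%nat -> (s i <= s j)%nat.
Proof. intros H i j Hij. induction Hij; auto. specialize (H m). lia. Qed.

Lemma cv_subseq (u : nat -> R) l (s : nat -> nat) :
  Un_cv u l -> (forall j, (s j < s (S j))%nat) -> Un_cv (fun j => u (s j)) l.
Proof.
  intros Hu Hs e He. destruct (Hu e He) as [N H]. exists N. intros j Hj.
  apply H. pose proof (incr_ge s Hs j). lia.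
Qed.

Lemma cv_sum (m : nat) (u : nat -> nat -> R) (v : nat -> R) :
  (forall i, (i <= m)%nat -> Un_cv (fun k => u k i) (v i)) ->
  Un_cv (fun k => sum_f_R0 (u k) m) (sum_f_R0 v m).
Proof.
  induction m as [|m IH]; intros Hc; simpl.
  - apply Hc; auto.
  - apply CV_plus; [apply IH; intros; apply Hc; lia | apply Hc; lia].
Qed.

Lemma cv_from_bound (u : nat -> R) l : (forall k, Rabs (u k - l) < / (INR k + 1)) -> Un_cv u l.
Proof.
  intros H e He. destruct (inv_small e He) as [N HN]. exists N. intros k Hk.
  unfold R_dist. eapply Rlt_trans; [apply H| apply HN; auto].
Qed.

Lemma extract1 (u : nat -> R) : (forall k, 0 <= u k <= 1) ->
  exists (s : nat -> nat) l, (forall j, (s j < s (S j))%nat) /\ Un_cv (fun j => u (s j)) l.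
Proof.
  intro Hb.
  destruct (Bolzano_Weierstrass u (fun c => 0 <= c <= 1) (compact_P3 0 1) Hb) as [l Hl].
  assert (Hp : forall N j, exists p, (N <= p)%nat /\ Rabs (u p - l) < / (INR j + 1)).
  { intros N j.
    destruct (Hl (disc l (mkposreal _ (RinvN_pos j))) N) as [p [Hp1 Hp2]].
    - exists (mkposreal _ (RinvN_pos j)). intros y Hy. exact Hy.
    - exists p. split; auto. }
  pose (pick N j := proj1_sig (constructive_indefinite_description _ (Hp N j))).
  assert (Hpick : forall N j, (N <= pick N j)%nat /\ Rabs (u (pick N j) - l) < / (INR j + 1)).
  { intros N j. unfold pick. destruct constructive_indefinite_description; simpl; auto. }
  pose (s := fix s j := match j with O => pick O O | S j' => pick (S (s j')) (S j') end).
  exists s, l. split.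
  - intro j. simpl. destruct (Hpick (S (s j)) (S j)). lia.
  - apply cv_from_bound. intro j. destruct j; simpl; apply Hpick.
Qed.

Lemma extractm (m : nat) (Y : nat -> nat -> R) : (forall k i, (i < m)%nat -> 0 <= Y k i <= 1) ->
  exists (s : nat -> nat) (L : nat -> R), (forall j, (s j < s (S j))%nat) /\
    forall i, (i < m)%nat -> Un_cv (fun j => Y (s j) i) (L i).
Proof.
  induction m as [|m IH]; intros Hb.
  - exists (fun j => j), (fun _ => 0). split; [intros; lia| intros; lia].
  - destruct IH as [s [L [Hs HL]]]. { intros; apply Hb; lia. }
    destruct (extract1 (fun j => Y (s j) m)) as [t [l [Ht Hl]]]. { intros; apply Hb; lia. }
    exists (fun j => s (t j)), (fun i => if Nat.eqb i m then l else L i). split.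
    + intro j. specialize (Ht j).
      pose proof (incr_mono s Hs (S (t j)) (t (S j)) ltac:(lia)). specialize (Hs (t j)). lia.
    + intros i Hi. destruct (Nat.eqb_spec i m).
      * subst. exact Hl.
      * apply (cv_subseq (fun j => Y (s j) i)); auto. apply HL; lia.
Qed.

Lemma simplex_eq {m} (a b : Simplex m) : proj1_sig a = proj1_sig b -> a = b.
Proof. destruct a, b; simpl; intro; subst; f_equal; apply proof_irrelevance. Qed.

Lemma I01_eq (a b : I01) : proj1_sig a = proj1_sig b -> a = b.
Proof. destruct a, b; simpl; intro; subst; f_equal; apply proof_irrelevance. Qed.

Lemma seq_cont {A : CStarAlg} {m} (F : Simplex m -> A) (y : Simplex m) :
  (forall Y : nat -> Simplex m,
     (forall i, (i <= m)%nat -> Un_cv (fun k => proj1_sig (Y k) i) (proj1_sig y i)) ->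
     forall eps, eps > 0 -> exists N, forall k, (k >= N)%nat -> dist (F (Y k)) (F y) < eps) ->
  forall eps, eps > 0 -> exists d, d > 0 /\ forall y' : Simplex m,
    (forall i, (i <= m)%nat -> Rabs (proj1_sig y i - proj1_sig y' i) < d) -> dist (F y) (F y') < eps.
Proof.
  intros H eps He. apply NNPP; intro Hn.
  assert (Hk : forall k : nat, exists y' : Simplex m,
    (forall i, (i <= m)%nat -> Rabs (proj1_sig y i - proj1_sig y' i) < / (INR k + 1)) /\
    ~ dist (F y) (F y') < eps).
  { intro k. apply NNPP; intro H2. apply Hn. exists (/ (INR k + 1)); split; [apply RinvN_pos|].
    intros y' Hy'. apply NNPP; intro H3. apply H2. exists y'; auto. }
  pose (Y k := proj1_sig (constructive_indefinite_description _ (Hk k))).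
  assert (HY : forall k, (forall i, (i <= m)%nat -> Rabs (proj1_sig y i - proj1_sig (Y k) i) < / (INR k + 1)) /\
    ~ dist (F y) (F (Y k)) < eps).
  { intro k. unfold Y. destruct constructive_indefinite_description; auto. }
  destruct (H Y) with (eps := eps) as [N HN]; auto.
  - intros i Hi. apply cv_from_bound. intro k. rewrite Rabs_minus_sym. apply HY; auto.
  - apply (proj2 (HY N)). rewrite dist_sym. apply HN. lia.
Qed.

Lemma inv_mono (a b : nat) : (a <= b)%nat -> / (INR b + 1) <= / (INR a + 1).
Proof.
  intro H. apply Rinv_le_contravar.
  - pose proof (pos_INR a). lra.
  - apply le_INR in H. lra.
Qed.

Lemma unif_cont {A : CStarAlg} {m} (h : Simplex m -> A) : continuous_on_simplex h ->
  forall eps, eps > 0 -> exists d, d > 0 /\ forall y y' : Simplex m,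
   (forall i, (i <= m)%nat -> Rabs (proj1_sig y i - proj1_sig y' i) < d) -> dist (h y) (h y') < eps.
Proof.
  intros Hc eps He. apply NNPP; intro Hn.
  assert (Hk : forall k : nat, exists p : Simplex m * Simplex m,
    (forall i, (i <= m)%nat -> Rabs (proj1_sig (fst p) i - proj1_sig (snd p) i) < / (INR k + 1)) /\
    ~ dist (h (fst p)) (h (snd p)) < eps).
  { intro k. apply NNPP; intro H2. apply Hn. exists (/ (INR k + 1)); split; [apply RinvN_pos|].
    intros y y' Hy'. apply NNPP; intro H3. apply H2. exists (y, y'); auto. }
  pose (P k := proj1_sig (constructive_indefinite_description _ (Hk k))).
  assert (HP : forall k, (forall i, (i <= m)%nat -> Rabs (proj1_sig (fst (P k)) i - proj1_sig (snd (P k)) i) < / (INR k + 1)) /\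
    ~ dist (h (fst (P k))) (h (snd (P k))) < eps).
  { intro k. unfold P. destruct constructive_indefinite_description; auto. }
  destruct (extractm (S m) (fun k i => proj1_sig (fst (P k)) i)) as [s [L [Hs HL]]].
  { intros k i Hi. apply (proj1 (proj2_sig (fst (P k)))). lia. }
  pose (L' i := if Nat.leb i m then L i else 0).
  assert (HL' : forall i, (i <= m)%nat -> Un_cv (fun j => proj1_sig (fst (P (s j))) i) (L' i)).
  { intros i Hi. unfold L'. destruct (Nat.leb_spec i m); [|lia]. apply HL. lia. }
  assert (Hin : in_simplex m L').
  { split; [|split].
    - intros i Hi. apply (cv_bound _ _ _ _ (HL' i Hi)). intro k.
      apply (proj1 (proj2_sig (fst (P (s k))))); auto.
    - intros i Hi. unfold L'. destruct (Nat.leb_spec i m); [lia|auto].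
    - pose proof (cv_sum m (fun j i => proj1_sig (fst (P (s j))) i) L' HL') as Hs1.
      assert (E : (fun k => sum_f_R0 (fun i => proj1_sig (fst (P (s k))) i) m) = fun _ => 1).
      { apply functional_extensionality. intro k. exact (proj2 (proj2 (proj2_sig (fst (P (s k)))))). }
      simpl in Hs1. rewrite E in Hs1. apply (UL_sequence _ _ _ Hs1 (cv_const 1)). }
  pose (l := exist _ L' Hin : Simplex m).
  destruct (Hc l (eps / 2)) as [d [Hd Hl]]; [lra|].
  destruct (cv_unif m (fun j i => proj1_sig (fst (P (s j))) i) L' HL' (d / 2)) as [N1 H1]; [lra|].
  destruct (inv_small (d / 2)) as [N2 H2]; [lra|].
  pose (k := max N1 N2).
  assert (Ha : dist (h l) (h (fst (P (s k)))) < eps / 2).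
  { apply Hl. intros i Hi. simpl. rewrite Rabs_minus_sym.
    eapply Rlt_trans; [apply (H1 k); auto; lia| lra]. }
  assert (Hb : dist (h l) (h (snd (P (s k)))) < eps / 2).
  { apply Hl. intros i Hi. simpl.
    replace (L' i - proj1_sig (snd (P (s k))) i) with
      ((L' i - proj1_sig (fst (P (s k))) i) + (proj1_sig (fst (P (s k))) i - proj1_sig (snd (P (s k))) i)) by ring.
    eapply Rle_lt_trans; [apply Rabs_triang|].
    rewrite (Rabs_minus_sym (L' i)).
    assert (Rabs (proj1_sig (fst (P (s k))) i - L' i) < d / 2) by (apply H1; auto; lia).
    assert (Rabs (proj1_sig (fst (P (s k))) i - proj1_sig (snd (P (s k))) i) < d / 2).
    { eapply Rlt_le_trans; [apply (proj1 (HP (s k))); auto|].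
      eapply Rle_trans; [apply inv_mono, (incr_ge s Hs k)|].
      left. apply H2. lia. }
    lra. }
  apply (proj2 (HP (s k))).
  eapply Rle_lt_trans; [apply (dist_tri _ (h l))|].
  rewrite dist_sym. lra.
Qed.

Lemma div_le (a c b : R) : 0 < b -> a <= c -> a / b <= c / b.
Proof. intros. unfold Rdiv. apply Rmult_le_compat_r; auto. left. apply Rinv_0_lt_compat; auto. Qed.

Lemma div_nonneg (a b : R) : 0 <= a -> 0 < b -> 0 <= a / b.
Proof. intros. unfold Rdiv. apply Rmult_le_pos; auto. left. apply Rinv_0_lt_compat; auto. Qed.

Lemma div_le1 (a b : R) : a <= b -> 0 < b -> a / b <= 1.
Proof. intros. replace 1 with (b / b) by (field; lra). apply div_le; auto. Qed.

Lemma div_lt1 (a b : R) : a < b -> 0 < b -> a / b < 1.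
Proof. intros. replace 1 with (b / b) by (field; lra). unfold Rdiv. apply Rmult_lt_compat_r; auto. apply Rinv_0_lt_compat; auto. Qed.

Lemma sum_nonneg (f : nat -> R) (k : nat) : (forall j, (j <= k)%nat -> 0 <= f j) -> 0 <= sum_f_R0 f k.
Proof.
  induction k as [|k IH]; intro Hp; simpl.
  - apply Hp; lia.
  - pose proof (Hp (S k) (le_n _)). assert (0 <= sum_f_R0 f k) by (apply IH; intros; apply Hp; lia). lra.
Qed.

Lemma sum_ge_term (f : nat -> R) (k i : nat) : (forall j, (j <= k)%nat -> 0 <= f j) -> (i <= k)%nat -> f i <= sum_f_R0 f k.
Proof.
  induction k as [|k IH]; intros Hp Hi.
  - assert (i = O) by lia. subst. simpl. lra.
  - simpl. destruct (Nat.eq_dec i (S k)).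
    + subst. assert (0 <= sum_f_R0 f k).
      { apply sum_nonneg. intros; apply Hp; lia. }
      lra.
    + assert (f i <= sum_f_R0 f k) by (apply IH; [intros; apply Hp; lia| lia]).
      pose proof (Hp (S k) (le_n _)). lra.
Qed.

Fixpoint minf (x : nat -> R) (k : nat) : R :=
  match k with O => x O | S k' => Rmin (minf x k') (x (S k')) end.

Lemma minf_le x k i : (i <= k)%nat -> minf x k <= x i.
Proof.
  induction k as [|k IH]; intro Hi; simpl.
  - assert (i = O) by lia. subst. lra.
  - destruct (Nat.eq_dec i (S k)).
    + subst. apply Rmin_r.
    + eapply Rle_trans; [apply Rmin_l| apply IH; lia].
Qed.

Lemma minf_ge x k c : (forall i, (i <= k)%nat -> c <= x i) -> c <= minf x k.
Proof.
  induction k as [|k IH]; intro H; simpl.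
  - apply H; lia.
  - apply Rmin_glb; [apply IH; intros; apply H; lia | apply H; lia].
Qed.

Lemma cv_minf k (u : nat -> nat -> R) (v : nat -> R) :
  (forall i, (i <= k)%nat -> Un_cv (fun j => u j i) (v i)) ->
  Un_cv (fun j => minf (u j) k) (minf v k).
Proof.
  induction k as [|k IH]; intro H; simpl.
  - apply H; lia.
  - apply cv_Rmin; [apply IH; intros; apply H; lia | apply H; lia].
Qed.

Lemma minf_bounds n (x : Simplex n) : 0 <= minf (proj1_sig x) n <= 1.
Proof.
  destruct x as [v Hv0]; simpl; destruct Hv0 as [Hv _]. split.
  - apply minf_ge. intros; apply Hv; auto.
  - eapply Rle_trans; [apply (minf_le v n O); lia| apply Hv; lia].
Qed.

Definition phiv (n : nat) (t : R) (x : nat -> R) : nat -> R := fun i =>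
  if Nat.leb i n then (1 - t) * x i / (1 + minf x n)
  else if Nat.eqb i (S n) then (minf x n + t) / (1 + minf x n) else 0.

Lemma phiv_lo n t x i : (i <= n)%nat -> phiv n t x i = (1 - t) * x i / (1 + minf x n).
Proof. intro H. unfold phiv. destruct (Nat.leb_spec i n); [reflexivity|lia]. Qed.

Lemma phiv_top n t x : phiv n t x (S n) = (minf x n + t) / (1 + minf x n).
Proof. unfold phiv. destruct (Nat.leb_spec (S n) n); [lia|]. rewrite Nat.eqb_refl. reflexivity. Qed.

Lemma phiv_hi n t x i : (S n < i)%nat -> phiv n t x i = 0.
Proof.
  intro H. unfold phiv. destruct (Nat.leb_spec i n); [lia|].
  destruct (Nat.eqb_spec i (S n)); [lia|reflexivity].
Qed.

Lemma phiv_simplex n (t : I01) (x : Simplex n) : in_simplex (S n) (phiv n (proj1_sig t) (proj1_sig x)).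
Proof.
  pose proof (minf_bounds n x) as Hm.
  destruct t as [t Ht]. destruct x as [x [Hx1 [Hx2 Hx3]]]. simpl in *.
  set (mu := minf x n) in *.
  split; [|split].
  - intros i Hi. destruct (Nat.eq_dec i (S n)).
    + subst. rewrite phiv_top. fold mu. split; [apply div_nonneg; lra| apply div_le1; lra].
    + rewrite phiv_lo by lia. fold mu. pose proof (Hx1 i ltac:(lia)).
      split; [apply div_nonneg; [apply Rmult_le_pos|]; lra|apply div_le1; [|lra]].
      assert ((1 - t) * x i <= 1 * 1) by (apply Rmult_le_compat; lra). lra.
  - intros i Hi. apply phiv_hi. auto.
  - simpl. rewrite phiv_top. fold mu.
    rewrite (sum_eq _ (fun i => x i * ((1 - t) / (1 + mu)))).
    + rewrite <- scal_sum, Hx3. field. lra.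
    + intros i Hi. rewrite phiv_lo by auto. fold mu. field. lra.
Qed.

Definition Phi_pt (n : nat) (p : I01 * Simplex n) : Simplex (S n) :=
  exist _ (phiv n (proj1_sig (fst p)) (proj1_sig (snd p))) (phiv_simplex n (fst p) (snd p)).

Definition Xf (n : nat) (y : nat -> R) : nat -> R := fun i =>
  if Nat.leb i n then y i / (1 - y (S n)) else 0.

Definition Tf (n : nat) (y : nat -> R) : R :=
  y (S n) * (1 + minf (Xf n y) n) - minf (Xf n y) n.

Lemma Xf_lo n y i : (i <= n)%nat -> Xf n y i = y i / (1 - y (S n)).
Proof. intro H. unfold Xf. destruct (Nat.leb_spec i n); [reflexivity|lia]. Qed.

Lemma sum_top n (y : Simplex (S n)) : sum_f_R0 (proj1_sig y) n = 1 - proj1_sig y (S n).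
Proof. destruct y as [v Hv]. destruct Hv as [H1 [H2 Hs]]. simpl in *. lra. Qed.

Lemma Xf_simplex n (y : Simplex (S n)) : proj1_sig y (S n) < 1 -> in_simplex n (Xf n (proj1_sig y)).
Proof.
  intro Hlt. pose proof (sum_top n y) as Hs.
  destruct y as [y [Hy1 [Hy2 Hy3]]]. simpl in *.
  split; [|split].
  - intros i Hi. rewrite Xf_lo by auto. pose proof (Hy1 i ltac:(lia)).
    split; [apply div_nonneg; lra| apply div_le1; [|lra]].
    rewrite <- Hs. apply sum_ge_term; auto. intros; apply Hy1; lia.
  - intros i Hi. unfold Xf. destruct (Nat.leb_spec i n); [lia|reflexivity].
  - rewrite (sum_eq _ (fun i => y i * / (1 - y (S n)))).
    + rewrite <- scal_sum, Hs. field. lra.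
    + intros i Hi. rewrite Xf_lo by auto. reflexivity.
Qed.

Definition e0 : nat -> R := fun i => if Nat.eqb i O then 1 else 0.

Lemma e0_simplex m : in_simplex m e0.
Proof.
  split; [|split].
  - intros i _. unfold e0. destruct (Nat.eqb i O); lra.
  - intros i Hi. unfold e0. destruct (Nat.eqb_spec i O); [lia|reflexivity].
  - clear. induction m as [|m IH]; simpl; [reflexivity|]. rewrite IH. unfold e0. simpl. ring.
Qed.

Definition mkS (m : nat) (x : nat -> R) : Simplex m :=
  match excluded_middle_informative (in_simplex m x) with
  | left H => exist _ x H
  | right _ => exist _ e0 (e0_simplex m)
  end.

Lemma mkS_val m x : in_simplex m x -> proj1_sig (mkS m x) = x.
Proof. intro H. unfold mkS. destruct excluded_middle_informative; [reflexivity|contradiction]. Qed.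

Definition mkI (t : R) : I01 := exist _ (clamp t) (clamp_in t).

Definition Phi (n : nat) (A : CStarAlg) (I : nat -> A -> Prop) (J : nat -> Prop)
  (g : I01 * Simplex n -> A) (y : Simplex (S n)) : A :=
  if Rlt_dec (proj1_sig y (S n)) 1 then g (mkI (Tf n (proj1_sig y)), mkS n (Xf n (proj1_sig y)))
  else zero.

Lemma Xf_phiv n (t : R) (x : Simplex n) : 0 <= t < 1 ->
  Xf n (phiv n t (proj1_sig x)) = proj1_sig x.
Proof.
  intro Ht. pose proof (minf_bounds n x) as Hm.
  apply functional_extensionality; intro i. unfold Xf.
  destruct (Nat.leb_spec i n).
  - rewrite phiv_lo, phiv_top by auto. field. lra.
  - symmetry. apply (proj1 (proj2 (proj2_sig x))). auto.
Qed.

Lemma roundtrip n (t : I01) (x : Simplex n) : proj1_sig t < 1 ->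
  proj1_sig (Phi_pt n (t, x)) (S n) < 1 /\
  mkI (Tf n (proj1_sig (Phi_pt n (t, x)))) = t /\
  mkS n (Xf n (proj1_sig (Phi_pt n (t, x)))) = x.
Proof.
  intro Hlt. pose proof (minf_bounds n x) as Hm. pose proof (proj2_sig t) as Ht. simpl in Ht.
  simpl. split; [|split].
  - rewrite phiv_top. apply div_lt1; lra.
  - apply I01_eq. simpl. unfold Tf. rewrite Xf_phiv by lra. rewrite phiv_top.
    rewrite clamp_id; [field; lra|].
    replace ((minf (proj1_sig x) n + proj1_sig t) / (1 + minf (proj1_sig x) n) * (1 + minf (proj1_sig x) n) -
      minf (proj1_sig x) n) with (proj1_sig t) by (field; lra). lra.
  - apply simplex_eq. rewrite Xf_phiv by lra. apply mkS_val. apply (proj2_sig x).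
Qed.

Lemma F_t0 n (t : I01) (x : Simplex n) : proj1_sig t = 0 -> in_face_j (S n) (Phi_pt n (t, x)).
Proof.
  intros H0 i Hi. simpl. rewrite H0. pose proof (minf_bounds n x) as Hm.
  destruct (Nat.eq_dec i (S n)); [subst; lra|].
  rewrite phiv_top, phiv_lo by lia. apply div_le; [lra|].
  pose proof (minf_le (proj1_sig x) n i ltac:(lia)). lra.
Qed.

Lemma F_t1 n (t : I01) (x : Simplex n) : proj1_sig t = 1 -> on_boundary (Phi_pt n (t, x)).
Proof.
  intros H1. exists O. split; [lia|]. simpl. rewrite phiv_lo by lia. rewrite H1.
  unfold Rdiv. ring.
Qed.

Lemma F_face n (t : I01) (x : Simplex n) j : (j <= n)%nat -> in_face_j j x -> in_face_j j (Phi_pt n (t, x)).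
Proof.
  intros Hj Hf i Hi. simpl. pose proof (minf_bounds n x) as Hm. pose proof (proj2_sig t) as Ht. simpl in Ht.
  rewrite (phiv_lo n _ _ j) by auto.
  destruct (Nat.eq_dec i (S n)).
  - subst. rewrite phiv_top. apply div_le; [lra|].
    pose proof (minf_ge (proj1_sig x) n (proj1_sig x j) Hf).
    pose proof (proj1 (proj2_sig x) j Hj).
    assert ((1 - proj1_sig t) * proj1_sig x j <= 1 * proj1_sig x j) by (apply Rmult_le_compat_r; lra). lra.
  - rewrite phiv_lo by lia. apply div_le; [lra|]. apply Rmult_le_compat_l; [lra|]. apply Hf. lia.
Qed.

Lemma F_bd n (t : I01) (x : Simplex n) : on_boundary x -> on_boundary (Phi_pt n (t, x)).
Proof.
  intros [i [Hi H0]]. exists i. split; [lia|]. simpl. rewrite phiv_lo by auto. rewrite H0. unfold Rdiv. ring.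
Qed.

Lemma F_lip n (s t : I01) (x : Simplex n) i : (i <= S n)%nat ->
  Rabs (proj1_sig (Phi_pt n (s, x)) i - proj1_sig (Phi_pt n (t, x)) i) <= Rabs (proj1_sig s - proj1_sig t).
Proof.
  intro Hi. simpl. pose proof (minf_bounds n x) as Hm.
  set (a := proj1_sig s). set (b := proj1_sig t). set (mu := minf (proj1_sig x) n) in *.
  destruct (Nat.eq_dec i (S n)).
  - subst. rewrite !phiv_top. fold mu.
    replace ((mu + a) / (1 + mu) - (mu + b) / (1 + mu)) with ((a - b) * / (1 + mu)) by (field; lra).
    rewrite Rabs_mult. rewrite (Rabs_right (/ (1 + mu))) by (left; apply Rinv_0_lt_compat; lra).
    rewrite <- (Rmult_1_r (Rabs (a - b))) at 2. apply Rmult_le_compat_l; [apply Rabs_pos|].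
    rewrite <- Rinv_1. apply Rinv_le_contravar; lra.
  - rewrite !phiv_lo by lia. fold mu. pose proof (proj1 (proj2_sig x) i ltac:(lia)) as Hx.
    replace ((1 - a) * proj1_sig x i / (1 + mu) - (1 - b) * proj1_sig x i / (1 + mu))
      with ((b - a) * (proj1_sig x i / (1 + mu))) by (field; lra).
    rewrite Rabs_mult, Rabs_minus_sym. rewrite (Rabs_right (proj1_sig x i / (1 + mu))).
    + rewrite <- (Rmult_1_r (Rabs (a - b))) at 2. apply Rmult_le_compat_l; [apply Rabs_pos|].
      apply div_le1; lra.
    + apply Rle_ge, div_nonneg; lra.
Qed.

Lemma F_cont n (t : R) (x : Simplex n) (Y : nat -> Simplex n) :
  (forall i, (i <= n)%nat -> Un_cv (fun k => proj1_sig (Y k) i) (proj1_sig x i)) ->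
  forall i, (i <= S n)%nat -> Un_cv (fun k => phiv n t (proj1_sig (Y k)) i) (phiv n t (proj1_sig x) i).
Proof.
  intros Hc i Hi. pose proof (minf_bounds n x) as Hm.
  pose proof (cv_minf n (fun k => proj1_sig (Y k)) (proj1_sig x) Hc) as Hmu.
  destruct (Nat.eq_dec i (S n)).
  - subst. rewrite phiv_top.
    assert (E : (fun k => phiv n t (proj1_sig (Y k)) (S n)) =
      (fun k => (minf (proj1_sig (Y k)) n + t) / (1 + minf (proj1_sig (Y k)) n))).
    { apply functional_extensionality; intro k. apply phiv_top. }
    rewrite E. apply cv_div; [apply CV_plus; [exact Hmu| apply cv_const]|
      apply CV_plus; [apply cv_const| exact Hmu]| lra].
  - rewrite phiv_lo by lia.
    assert (E : (fun k => phiv n t (proj1_sig (Y k)) i) =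
      (fun k => (1 - t) * proj1_sig (Y k) i / (1 + minf (proj1_sig (Y k)) n))).
    { apply functional_extensionality; intro k. apply phiv_lo. lia. }
    rewrite E. apply cv_div; [apply CV_mult; [apply cv_const| apply Hc; lia]|
      apply CV_plus; [apply cv_const| exact Hmu]| lra].
Qed.

Lemma Xf_nonneg n (y : Simplex (S n)) i : proj1_sig y (S n) < 1 -> (i <= n)%nat -> 0 <= Xf n (proj1_sig y) i.
Proof.
  intros Hl Hi. rewrite Xf_lo by auto. apply div_nonneg; [|lra]. apply (proj1 (proj2_sig y)). lia.
Qed.

Lemma mu_nonneg n (y : Simplex (S n)) : proj1_sig y (S n) < 1 -> 0 <= minf (Xf n (proj1_sig y)) n.
Proof. intro Hl. apply minf_ge. intros; apply Xf_nonneg; auto. Qed.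

Lemma G_face_top n (y : Simplex (S n)) : proj1_sig y (S n) < 1 -> in_face_j (S n) y -> Tf n (proj1_sig y) <= 0.
Proof.
  intros Hl Hf. unfold Tf. set (v := proj1_sig y) in *. set (mu := minf (Xf n v) n).
  assert (Hc : v (S n) / (1 - v (S n)) <= mu).
  { apply minf_ge. intros i Hi. rewrite Xf_lo by auto. apply div_le; [lra|]. apply Hf. lia. }
  assert (H2 : v (S n) / (1 - v (S n)) * (1 - v (S n)) <= mu * (1 - v (S n)))
    by (apply Rmult_le_compat_r; lra).
  replace (v (S n) / (1 - v (S n)) * (1 - v (S n))) with (v (S n)) in H2 by (field; lra).
  lra.
Qed.

Lemma G_bd_top n (y : Simplex (S n)) : proj1_sig y (S n) = 0 -> Tf n (proj1_sig y) <= 0.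
Proof.
  intro H0. pose proof (mu_nonneg n y ltac:(lra)). unfold Tf. rewrite H0. lra.
Qed.

Lemma G_val n (y : Simplex (S n)) : proj1_sig y (S n) < 1 -> proj1_sig (mkS n (Xf n (proj1_sig y))) = Xf n (proj1_sig y).
Proof. intro. apply mkS_val. apply Xf_simplex; auto. Qed.

Lemma G_bd_lo n (y : Simplex (S n)) i : proj1_sig y (S n) < 1 -> (i <= n)%nat -> proj1_sig y i = 0 ->
  on_boundary (mkS n (Xf n (proj1_sig y))).
Proof.
  intros Hl Hi H0. exists i. split; auto. rewrite G_val by auto. rewrite Xf_lo by auto. rewrite H0. unfold Rdiv; ring.
Qed.

Lemma G_face n (y : Simplex (S n)) j : proj1_sig y (S n) < 1 -> (j <= n)%nat -> in_face_j j y ->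
  in_face_j j (mkS n (Xf n (proj1_sig y))).
Proof.
  intros Hl Hj Hf i Hi. rewrite G_val by auto. rewrite !Xf_lo by auto. apply div_le; [lra|]. apply Hf. lia.
Qed.

Lemma H_notlt n (y : Simplex (S n)) : ~ proj1_sig y (S n) < 1 -> on_boundary y.
Proof.
  intro Hn. exists O. split; [lia|]. pose proof (sum_top n y) as Hs.
  pose proof (proj1 (proj2_sig y)) as Hb.
  pose proof (Hb (S n) (le_n _)). pose proof (Hb O ltac:(lia)).
  assert (proj1_sig y O <= sum_f_R0 (proj1_sig y) n) by (apply sum_ge_term; [intros; apply Hb; lia| lia]).
  lra.
Qed.

Lemma H_neg n (y : Simplex (S n)) : proj1_sig y (S n) < 1 -> Tf n (proj1_sig y) < 0 -> in_face_j (S n) y.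
Proof.
  intros Hl Ht i Hi. unfold Tf in Ht. set (v := proj1_sig y) in *. set (mu := minf (Xf n v) n) in *.
  destruct (Nat.eq_dec i (S n)); [subst; lra|].
  assert (H1 : mu <= v i / (1 - v (S n))) by (rewrite <- Xf_lo by lia; apply minf_le; lia).
  assert (H2 : mu * (1 - v (S n)) <= v i / (1 - v (S n)) * (1 - v (S n))) by (apply Rmult_le_compat_r; lra).
  replace (v i / (1 - v (S n)) * (1 - v (S n))) with (v i) in H2 by (field; lra).
  lra.
Qed.

Lemma H_pos n (y : Simplex (S n)) : proj1_sig y (S n) < 1 -> 0 <= Tf n (proj1_sig y) ->
  proj1_sig (Phi_pt n (mkI (Tf n (proj1_sig y)), mkS n (Xf n (proj1_sig y)))) = proj1_sig y.
Proof.
  intros Hl Ht. pose proof (mu_nonneg n y Hl) as Hm. simpl. rewrite G_val by auto.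
  assert (Ht1 : Tf n (proj1_sig y) <= 1).
  { unfold Tf. assert (0 <= minf (Xf n (proj1_sig y)) n * (1 - proj1_sig y (S n))) by (apply Rmult_le_pos; lra).
    nra. }
  rewrite clamp_id by lra.
  apply functional_extensionality; intro i. unfold Tf in *.
  set (v := proj1_sig y) in *. set (mu := minf (Xf n v) n) in *.
  destruct (Compare_dec.le_lt_dec i n).
  - rewrite phiv_lo by auto. fold mu. rewrite Xf_lo by auto. field. lra.
  - destruct (Nat.eq_dec i (S n)).
    + subst. rewrite phiv_top. fold mu. field. lra.
    + rewrite phiv_hi by lia. symmetry. apply (proj1 (proj2 (proj2_sig y))). lia.
Qed.

Lemma Phi_left n A I J g (y : Simplex (S n)) : proj1_sig y (S n) < 1 ->
  Phi n A I J g y = g (mkI (Tf n (proj1_sig y)), mkS n (Xf n (proj1_sig y))).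
Proof. intro H. unfold Phi. destruct Rlt_dec; [reflexivity|contradiction]. Qed.

Lemma Phi_right n A I J g (y : Simplex (S n)) : ~ proj1_sig y (S n) < 1 -> Phi n A I J g y = zero.
Proof. intro H. unfold Phi. destruct Rlt_dec; [contradiction|reflexivity]. Qed.

Lemma ez_top n {A : CStarAlg} (I : nat -> A -> Prop) a : extend_zero n I (S n) a <-> a = zero.
Proof. unfold extend_zero. rewrite Nat.eqb_refl. unfold zero_ideal. tauto. Qed.

Lemma ez_lo n {A : CStarAlg} (I : nat -> A -> Prop) j : (j <= n)%nat -> extend_zero n I j = I j.
Proof. intro H. unfold extend_zero. destruct (Nat.eqb_spec j (S n)); [lia|reflexivity]. Qed.

Lemma K2 n A I J g : inSBJ n I J g -> forall p, g p = Phi n A I J g (Phi_pt n p).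
Proof.
  intros Hg [t x]. destruct (Rlt_dec (proj1_sig t) 1) as [r|r].
  - destruct (roundtrip n t x r) as [H1 [H2 H3]]. rewrite Phi_left by auto. rewrite H2, H3. reflexivity.
  - pose proof (proj2_sig t) as Ht. simpl in Ht.
    assert (Ht1 : proj1_sig t = 1) by lra.
    rewrite Phi_right.
    + apply (proj1 (proj2 Hg)). right; auto.
    + simpl. rewrite phiv_top, Ht1. pose proof (minf_bounds n x).
      replace ((minf (proj1_sig x) n + 1) / (1 + minf (proj1_sig x) n)) with 1 by (field; lra). lra.
Qed.

Lemma K3 n A I J h : inBJ (S n) (extend_zero n I) (addJ J (S n)) h ->
  Phi n A I J (fun p => h (Phi_pt n p)) = h.
Proof.
  intros [[Hc [Hb Hf]] HJ]. apply functional_extensionality; intro y.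
  destruct (Rlt_dec (proj1_sig y (S n)) 1) as [r|r].
  - rewrite Phi_left by auto. destruct (Rle_lt_dec 0 (Tf n (proj1_sig y))) as [r2|r2].
    + f_equal. apply simplex_eq. apply H_pos; auto.
    + transitivity (@zero A).
      * apply (ez_top n I). apply Hf; auto. apply F_t0. simpl. apply clamp_le0. lra.
      * symmetry. apply (ez_top n I). apply Hf; auto. apply H_neg; auto.
  - rewrite Phi_right by auto. symmetry. apply Hb. apply H_notlt; auto.
Qed.

Lemma backward_mem n (A : CStarAlg) I J (h : Simplex (S n) -> A) :
  inBJ (S n) (extend_zero n I) (addJ J (S n)) h -> inSBJ n I J (fun p => h (Phi_pt n p)).
Proof.
  intros [[Hc [Hb Hf]] HJ]. split; [|split].
  - intro t. split; [split; [|split]|].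
    + intros x. apply (seq_cont (fun x => h (Phi_pt n (t, x))) x).
      intros Y HY eps He.
      destruct (Hc (Phi_pt n (t, x)) eps He) as [d [Hd Hd2]].
      destruct (cv_unif (S n) (fun k i => phiv n (proj1_sig t) (proj1_sig (Y k)) i)
        (phiv n (proj1_sig t) (proj1_sig x)) (F_cont n (proj1_sig t) x Y HY) d Hd) as [N HN].
      exists N. intros k Hk. rewrite dist_sym. apply Hd2. intros i Hi. simpl.
      rewrite Rabs_minus_sym. apply HN; auto.
    + intros x Hx. apply Hb. apply F_bd; auto.
    + intros j x Hj Hx. rewrite <- (ez_lo n I j Hj). apply Hf; [lia|]. apply F_face; auto.
    + intros j' x Hj' HnJ Hx. apply (HJ j'); [lia| |apply F_face; auto].
      intros [H1|H1]; [contradiction|lia].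
  - intros t x [H0|H1].
    + apply (ez_top n I). apply Hf; auto. apply F_t0; auto.
    + apply Hb. apply F_t1; auto.
  - intros t eps He. destruct (unif_cont h Hc eps He) as [d [Hd Hd2]].
    exists d. split; auto. intros s Hs x. left. apply Hd2. intros i Hi.
    eapply Rle_lt_trans; [apply F_lip; auto| auto].
Qed.

Lemma cv_Xf n (Y : nat -> Simplex (S n)) (y : Simplex (S n)) :
  proj1_sig y (S n) < 1 ->
  (forall i, (i <= S n)%nat -> Un_cv (fun k => proj1_sig (Y k) i) (proj1_sig y i)) ->
  forall i, (i <= n)%nat -> Un_cv (fun k => Xf n (proj1_sig (Y k)) i) (Xf n (proj1_sig y) i).
Proof.
  intros Hl HY i Hi.
  assert (E : (fun k => Xf n (proj1_sig (Y k)) i) = fun k => proj1_sig (Y k) i / (1 - proj1_sig (Y k) (S n))).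
  { apply functional_extensionality; intro k. apply Xf_lo; auto. }
  rewrite E, Xf_lo by auto. apply cv_div; [apply HY; lia| apply CV_minus; [apply cv_const| apply HY; lia]| lra].
Qed.

Lemma cv_Tf n (Y : nat -> Simplex (S n)) (y : Simplex (S n)) :
  proj1_sig y (S n) < 1 ->
  (forall i, (i <= S n)%nat -> Un_cv (fun k => proj1_sig (Y k) i) (proj1_sig y i)) ->
  Un_cv (fun k => Tf n (proj1_sig (Y k))) (Tf n (proj1_sig y)).
Proof.
  intros Hl HY. unfold Tf.
  pose proof (cv_minf n (fun k => Xf n (proj1_sig (Y k))) (Xf n (proj1_sig y)) (cv_Xf n Y y Hl HY)) as Hm.
  apply CV_minus; [apply CV_mult; [apply HY; lia| apply CV_plus; [apply cv_const| exact Hm]]| exact Hm].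
Qed.

Lemma forward_mem n (A : CStarAlg) I J g :
  ideal_decomp A n I -> inSBJ n I J g -> inBJ (S n) (extend_zero n I) (addJ J (S n)) (Phi n A I J g).
Proof.
  intros Hd Hg. destruct Hg as [Hg1 [Hg2 Hg3]].
  split; [split; [|split]|].
  -
    intros y. apply seq_cont. intros Y HY eps He.
    destruct (Rlt_dec (proj1_sig y (S n)) 1) as [r|r].
    + destruct (HY (S n) (le_n _) (1 - proj1_sig y (S n))) as [N0 HN0]; [lra|].
      assert (HN0' : forall k, (k >= N0)%nat -> proj1_sig (Y k) (S n) < 1).
      { intros k Hk. specialize (HN0 k Hk). unfold R_dist in HN0. apply Rabs_def2 in HN0. lra. }
      set (T := mkI (Tf n (proj1_sig y))). set (X := mkS n (Xf n (proj1_sig y))).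
      destruct (proj1 (proj1 (Hg1 T)) X (eps / 3)) as [d2 [Hd2 Hc2]]; [lra|].
      destruct (Hg3 T (eps / 3)) as [d1 [Hd1 Hc1]]; [lra|].
      destruct (cv_unif n (fun k i => Xf n (proj1_sig (Y k)) i) (Xf n (proj1_sig y)) (cv_Xf n Y y r HY) d2 Hd2) as [N2 HN2].
      destruct (cv_clamp _ _ (cv_Tf n Y y r HY) d1 Hd1) as [N1 HN1].
      exists (max N0 (max N1 N2)). intros k Hk.
      assert (Hk0 : proj1_sig (Y k) (S n) < 1) by (apply HN0'; lia).
      rewrite (Phi_left n A I J g (Y k)) by auto. rewrite (Phi_left n A I J g y) by auto. fold T X.
      eapply Rle_lt_trans; [apply (dist_tri _ (g (T, mkS n (Xf n (proj1_sig (Y k))))))|].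
      assert (A1 : dist (g (mkI (Tf n (proj1_sig (Y k))), mkS n (Xf n (proj1_sig (Y k)))))
                        (g (T, mkS n (Xf n (proj1_sig (Y k))))) <= eps / 3).
      { apply Hc1. simpl. apply HN1. lia. }
      assert (A2 : dist (g (T, X)) (g (T, mkS n (Xf n (proj1_sig (Y k))))) < eps / 3).
      { apply Hc2. intros i Hi. unfold X. rewrite !G_val by auto. rewrite Rabs_minus_sym. apply HN2; auto. lia. }
      rewrite (dist_sym (g (T, _))) in A2. lra.
    + rewrite (Phi_right n A I J g y) by auto.
      assert (Hy1 : proj1_sig y (S n) = 1) by (pose proof (proj1 (proj2_sig y) (S n) (le_n _)); lra).
      set (one := mkI 1).
      assert (Hone : proj1_sig one = 1) by (simpl; apply clamp_id; lra).
      destruct (Hg3 one (eps / 2)) as [d1 [Hd1 Hc1]]; [lra|].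
      destruct (HY (S n) (le_n _) (d1 / 2)) as [N HN]; [lra|].
      exists N. intros k Hk. specialize (HN k Hk). unfold R_dist in HN. rewrite Hy1 in HN.
      apply Rabs_def2 in HN.
      destruct (Rlt_dec (proj1_sig (Y k) (S n)) 1) as [r2|r2].
      * rewrite (Phi_left n A I J g (Y k)) by auto.
        set (Xk := mkS n (Xf n (proj1_sig (Y k)))).
        rewrite <- (Hg2 one Xk) by (right; auto).
        eapply Rle_lt_trans; [apply Hc1|lra].
        rewrite Hone.
        pose proof (mu_nonneg n (Y k) r2) as Hm0.
        assert (Hm1 : minf (Xf n (proj1_sig (Y k))) n <= 1).
        { pose proof (minf_bounds n Xk) as Hb. unfold Xk in Hb. rewrite G_val in Hb by auto. lra. }
        set (v := proj1_sig (Y k) (S n)) in *.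
        set (mu := minf (Xf n (proj1_sig (Y k))) n) in *.
        assert (HT : Tf n (proj1_sig (Y k)) = v * (1 + mu) - mu) by reflexivity.
        assert (0 <= mu * (1 - v)) by (apply Rmult_le_pos; lra).
        assert (mu * (1 - v) <= 1 - v) by (rewrite <- (Rmult_1_l (1 - v)) at 2; apply Rmult_le_compat_r; lra).
        change (proj1_sig (mkI (Tf n (proj1_sig (Y k))))) with (clamp (Tf n (proj1_sig (Y k)))). rewrite HT. unfold clamp, Rmax, Rmin. repeat destruct Rle_dec; fixn; unfold Rabs; repeat destruct Rcase_abs; nra.
      * rewrite (Phi_right n A I J g (Y k)) by auto. rewrite dist_self. lra.
  -
    intros y [i [Hi H0]].
    destruct (Rlt_dec (proj1_sig y (S n)) 1) as [r|r]; [|apply Phi_right; auto].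
    rewrite Phi_left by auto. destruct (Nat.eq_dec i (S n)).
    + subst. apply Hg2. left. simpl. apply clamp_le0. apply G_bd_top; auto.
    + apply (proj1 (proj2 (proj1 (Hg1 _)))). apply (G_bd_lo n y i); auto. lia.
  -
    intros j y Hj Hf. destruct (Nat.eq_dec j (S n)).
    + subst. apply ez_top.
      destruct (Rlt_dec (proj1_sig y (S n)) 1) as [r|r]; [|apply Phi_right; auto].
      rewrite Phi_left by auto. apply Hg2. left. simpl. apply clamp_le0. apply G_face_top; auto.
    + rewrite ez_lo by lia.
      destruct (Rlt_dec (proj1_sig y (S n)) 1) as [r|r].
      * rewrite Phi_left by auto. apply (proj2 (proj2 (proj1 (Hg1 _)))); [lia|]. apply G_face; auto. lia.
      * rewrite Phi_right by auto. destruct Hd as [Hid _]. apply (proj1 (Hid j ltac:(lia))).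
  -
    intros j' y Hj' HnJ Hf.
    assert (Hj2 : (j' <= n)%nat) by (destruct (Nat.eq_dec j' (S n)); [exfalso; apply HnJ; right; auto| lia]).
    destruct (Rlt_dec (proj1_sig y (S n)) 1) as [r|r]; [|apply Phi_right; auto].
    rewrite Phi_left by auto. apply (proj2 (Hg1 _) j'); auto.
    + intro HJ. apply HnJ. left. auto.
    + apply G_face; auto.
Qed.

Theorem proposition6p2p3 (n : nat) :
  exists Phi : forall (A : CStarAlg) (I : nat -> A -> Prop) (J : nat -> Prop),
      (I01 * Simplex n -> A) -> (Simplex (S n) -> A),
    (forall (A : CStarAlg) (I : nat -> A -> Prop) (J : nat -> Prop),
       ideal_decomp A n I ->
       (forall j, J j -> (j <= n)%nat) ->
       is_star_iso_on (inSBJ n I J) (inBJ (S n) (extend_zero n I) (addJ J (S n)))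
         (Phi A I J)) /\
    (forall (A A' : CStarAlg) (I : nat -> A -> Prop) (I' : nat -> A' -> Prop)
            (J : nat -> Prop) (phi : A -> A'),
       ideal_decomp A n I -> ideal_decomp A' n I' ->
       (forall j, J j -> (j <= n)%nat) ->
       is_star_hom phi ->
       (forall j a, (j <= n)%nat -> I j a -> I' j (phi a)) ->
       forall g, inSBJ n I J g ->
         Phi A' I' J (fun z => phi (g z)) = (fun y => phi (Phi A I J g y))).
Proof.
  exists (Phi n). split.
  - intros A I J Hd HJ. split; [|split; [|split; [|split; [|split; [|split]]]]].
    + intros f Hf. apply forward_mem; auto.
    + intros f g Hf Hg E. apply functional_extensionality; intro p.
      rewrite (K2 n A I J f Hf p), (K2 n A I J g Hg p), E. reflexivity.
    + intros h Hh. exists (fun p => h (Phi_pt n p)). split.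
      * apply backward_mem; auto.
      * apply K3; auto.
    + intros f g _ _. apply functional_extensionality; intro y. unfold Phi.
      destruct Rlt_dec; [reflexivity| symmetry; apply add0].
    + intros c f _. apply functional_extensionality; intro y. unfold Phi.
      destruct Rlt_dec; [reflexivity| symmetry; apply smul_zero].
    + intros f g _ _. apply functional_extensionality; intro y. unfold Phi.
      destruct Rlt_dec; [reflexivity| symmetry; apply mul_zero].
    + intros f _. apply functional_extensionality; intro y. unfold Phi.
      destruct Rlt_dec; [reflexivity| symmetry; apply star_zero].
  - intros A A' I I' J phi _ _ _ Hphi _ g _. apply functional_extensionality; intro y. unfold Phi.
    destruct Rlt_dec; [reflexivity| symmetry; apply hom_zero; auto].
Qed.
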